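(* Let $R=DV$ be any decomposition of the boundary matrix of the cone filtration, and let $\sigma\in K$ and $\omega*\tau$ ($\tau\in K$) form a persistence pair, $\operatorname{low}R[\omega*\tau]=\sigma$, with $d=\min\sigma>b=\max\tau$. Let $c=V[\omega*\tau]\cap(\omega*K\setminus K)+V[\omega*\tau]\cap K_{\ge b}$ (the part of $V[\omega*\tau]$ on cone simplices and $\omega$, plus the part on base simplices in $K_{\ge b}$), and let $z=\partial c$. Then $z$ is a cycle supported in $K[b,d]=K_{\ge b}\cap K_{\le d}$ (so $[z]\in H(K[b,d])$), and $\sigma\in z$ and $\tau\in z$.
   Context: Coefficients are in a field $\mathbb F$. Let $K$ be a finite $\Delta$-complex in which every simplex $\sigma$ carries an integer interval $T(\sigma)=[\min\sigma,\max\sigma]$ with $\min\sigma<\max\sigma$, such that whenever $\sigma$ is a proper face of $\tau$, $\min\sigma<\min\tau<\max\tau<\max\sigma$; assume the values $\min\sigma$ ($\sigma\in K$) are pairwise distinct and the values $\max\sigma$ are pairwise distinct. Write $K_{\le i}=\{\sigma:\min\sigma\le i\}$, $K_{\ge j}=\{\sigma:\max\sigma\ge j\}$ (subcomplexes), and $K[b,d]=K_{\ge b}\cap K_{\le d}$. The cone $\omega*K$ consists of the simplices of $K$ (''base simplices''), a new vertex $\omega$, and simplices $\omega*\sigma$ for $\sigma\in K$ (''cone simplices''), with $\partial(\omega*\sigma)=\sigma-\omega*\partial\sigma$ (for a vertex $v$, $\partial(\omega*v)=v-\omega$). The cone filtration orders base simplices by increasing $\min$, then $\omega$, then the simplices $\omega*\sigma$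 by decreasing $\max\sigma$. $D$ is the boundary matrix of $\omega*K$ with rows and columns in this order; $R=DV$ denotes a decomposition with $V$ invertible upper-triangular and $R$ reduced (pivots $\operatorname{low}$ — lowest nonzero entries — of nonzero columns in distinct rows). ''$\sigma\in c$'' means the coefficient of $\sigma$ in chain $c$ is nonzero; $c\cap L$ is the restriction of chain $c$ to simplices in $L$; a chain is supported in $L$ if all its nonzero coefficients are on simplices of $L$. *)

(* Defs.v *)
From HB Require Import structures.
From mathcomp Require Import all_boot all_order all_algebra.
Set Implicit Arguments. Unset Strict Implicit. Unset Printing Implicit Defensive.
Import Order.TTheory GRing.Theory Num.Theory.
Local Open Scope ring_scope.

(* A finite Delta-complex K with simplices 'I_n, dimension map [dim] and
   face maps [face s i] = d_i s (the i-th face, 0 <= i <= dim s). *)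
Definition is_delta_complex (n : nat) (dim : 'I_n -> nat) (face : 'I_n -> nat -> 'I_n) : Prop :=
  (forall s i, (0 < dim s)%N -> (i <= dim s)%N -> dim (face s i) = (dim s).-1)
  /\ (forall s i j, (1 < dim s)%N -> (i < j)%N -> (j <= dim s)%N ->
        face (face s j) i = face (face s i) j.-1).

Definition facet (n : nat) (dim : 'I_n -> nat) (face : 'I_n -> nat -> 'I_n) : rel 'I_n :=
  fun s t => (0 < dim t)%N && [exists i : 'I_(dim t).+1, face t i == s].

Definition proper_face n dim face (s t : 'I_n) : Prop :=
  exists2 u, facet dim face s u & connect (facet dim face) u t.

(* Standing hypotheses on the intervals T(s) = [mn s, mx s]. *)
Definition interval_hyps n dim face (mn mx : 'I_n -> int) : Prop :=
  (forall s, mn s < mx s)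
  /\ (forall s t, proper_face dim face s t -> mn s < mn t /\ mn t < mx t /\ mx t < mx s)
  /\ injective mn /\ injective mx.

(* Simplices of the cone w*K: base simplices, the apex w, cone simplices w*s. *)
Inductive csimp (n : nat) := Base of 'I_n | Apex | Cone of 'I_n.
Arguments Apex {n}.

Definition csimp_enc n (x : csimp n) : option ('I_n + 'I_n) :=
  match x with Base s => Some (inl s) | Apex => None | Cone s => Some (inr s) end.
Definition csimp_dec n (y : option ('I_n + 'I_n)) : csimp n :=
  match y with Some (inl s) => Base s | None => Apex | Some (inr s) => Cone s end.
Lemma csimp_encK n : cancel (@csimp_enc n) (@csimp_dec n).
Proof. by case. Qed.
HB.instance Definition _ n := Finite.copy (csimp n) (can_type (@csimp_encK n)).

Definition cf_le n (mn mx : 'I_n -> int) (x y : csimp n) : bool :=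
  match x, y with
  | Base s, Base t => mn s <= mn t
  | Base _, _ => true
  | Apex, Base _ => false
  | Apex, _ => true
  | Cone s, Cone t => mx t <= mx s
  | Cone _, _ => false
  end.

Definition bdK (F : fieldType) n (dim : 'I_n -> nat) (face : 'I_n -> nat -> 'I_n)
  (s t : 'I_n) : F :=
  if dim t is 0 then 0 else \sum_(i < (dim t).+1) (-1) ^+ i * (face t i == s)%:R.

(* Boundary matrix of w*K: D x y = coefficient of x in the boundary of y, with
   d(w*s) = s - w*ds  and  d(w*v) = v - w for a vertex v. *)
Definition coneD (F : fieldType) n dim face (x y : csimp n) : F :=
  match y, x with
  | Base t, Base s => bdK F dim face s t
  | Base _, _ => 0
  | Apex, _ => 0
  | Cone t, Base s => (s == t)%:R
  | Cone t, Apex => if dim t is 0 then -1 else 0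
  | Cone t, Cone s => - bdK F dim face s t
  end.

Definition is_low (F : fieldType) n (mn mx : 'I_n -> int) (M : csimp n -> csimp n -> F) (y x : csimp n) : Prop :=
  M x y != 0 /\ forall x', M x' y != 0 -> cf_le mn mx x' x.

(* R = D V with V invertible upper-triangular and R reduced *)
Definition RDV_decomposition (F : fieldType) n dim face (mn mx : 'I_n -> int)
  (R V : csimp n -> csimp n -> F) : Prop :=
  (forall x y, R x y = \sum_w coneD F dim face x w * V w y)
  /\ (forall x y, V x y != 0 -> cf_le mn mx x y)
  /\ (forall x, V x x != 0)
  /\ (forall y1 y2 x, is_low mn mx R y1 x -> is_low mn mx R y2 x -> y1 = y2).

Definition cbd (F : fieldType) n dim face (c : csimp n -> F) : csimp n -> F :=
  fun x => \sum_w coneD F dim face x w * c w.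

(* Main.v *)
Require Import Defs.
From mathcomp Require Import all_boot all_order all_algebra.
From mathcomp Require Import ring zify.
Set Implicit Arguments. Unset Strict Implicit. Unset Printing Implicit Defensive.
Import Order.TTheory GRing.Theory Num.Theory.
Local Open Scope ring_scope.
Lemma pick1 (F : ringType) (I : finType) (g : I -> F) (u : I) :
  \sum_s g s * (u == s)%:R = g u.
Proof.
rewrite (bigD1 u) //= eqxx mulr1 big1 ?addr0 // => s /negPf.
by rewrite eq_sym => ->; rewrite mulr0.
Qed.

Lemma tri0 (F : ringType) (m : nat) (G : nat -> nat -> F) :
  (forall i j, (i < j)%N -> (j <= m)%N -> G j i = - G i j.-1) ->
  \sum_(0 <= j < m.+1) \sum_(0 <= i < m) G j i = 0.
Proof.
move=> HG.
have E : forall j, \sum_(0 <= i < m) G j i =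
   \sum_(0 <= i < m) (if (i < j)%N then G j i else 0)
 + \sum_(0 <= i < m) (if (j <= i)%N then G j i else 0).
  move=> j; rewrite -big_split /=; apply: eq_bigr => i _.
  by case: ltnP => _; rewrite ?addr0 ?add0r.
under eq_bigr => j _ do rewrite E.
rewrite big_split /= big_nat_recl // big_nat_recr //=.
rewrite [X in X + _ + _]big1 ?add0r; last by move=> i _.
rewrite [X in _ + (_ + X)]big1_seq ?addr0; last first.
  by move=> i; rewrite mem_index_iota => /and3P[_ _ im]; rewrite leqNgt im.
rewrite [X in _ + X]exchange_big_nat /=.
rewrite -[X in X + _]opprK -sumrN; apply/eqP; rewrite addrC subr_eq0; apply/eqP.
apply: eq_big_nat => k /andP[_ km]; rewrite -sumrN.
apply: eq_big_nat => i /andP[_ im]; rewrite ltnS.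
case: leqP => ik; last by rewrite oppr0.
by rewrite (HG i k.+1) ?opprK.
Qed.

Lemma bdKE (F : fieldType) n dim face (s t : 'I_n) p :
  dim t = p.+1 -> bdK F dim face s t = \sum_(i < p.+2) (-1) ^+ i * (face t i == s)%:R.
Proof. by rewrite /bdK => ->. Qed.

Lemma bdK_dd (F : fieldType) n dim face : is_delta_complex dim face ->
  forall r t : 'I_n, \sum_s bdK F dim face r s * bdK F dim face s t = 0.
Proof.
move=> [Hdim Hface] r t.
case Et: (dim t) => [|p].
  by apply: big1 => s _; rewrite [bdK F dim face s t]/bdK Et mulr0.
under eq_bigr => s _ do rewrite (bdKE _ _ _ Et) mulr_sumr.
rewrite exchange_big /=.
have inner : forall i : 'I_p.+2, \sum_s bdK F dim face r s * ((-1) ^+ i * (face t i == s)%:R)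
   = (-1) ^+ i * bdK F dim face r (face t i).
  move=> i; rewrite -pick1 mulr_sumr; apply: eq_bigr => s _; ring.
under eq_bigr => i _ do rewrite inner.
have Hd : forall i : 'I_p.+2, dim (face t i) = p.
  by move=> i; rewrite Hdim Et //; rewrite -ltnS; exact: ltn_ord.
case: p Et inner Hd => [|q] Et inner Hd.
  by apply: big1 => i _; rewrite /bdK Hd mulr0.
under eq_bigr => i _ do rewrite (bdKE _ _ _ (Hd i)) mulr_sumr.
rewrite -(big_mkord xpredT (fun j => \sum_(i0 < q.+2) (-1) ^+ j * ((-1) ^+ i0 * (face (face t j) i0 == r)%:R))).
under eq_bigr => j _ do rewrite -(big_mkord xpredT (fun i => (-1) ^+ j * ((-1) ^+ i * (face (face t j) i == r)%:R))).
apply: tri0 => i j ij jm.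
rewrite Hface ?Et //.
case: j ij jm => [//|j] ij jm /=.
rewrite exprS; ring.
Qed.
Definition c3 n (u : ('I_n + 'I_n) + 'I_1) : csimp n :=
  match u with inl (inl s) => Base s | inl (inr s) => Cone s | inr _ => Apex end.
Definition c3inv n (x : csimp n) : ('I_n + 'I_n) + 'I_1 :=
  match x with Base s => inl (inl s) | Cone s => inl (inr s) | Apex => inr ord0 end.

Lemma sum_csimp (V : nmodType) n (f : csimp n -> V) :
  \sum_y f y = \sum_(s : 'I_n) f (Base s) + f Apex + \sum_(s : 'I_n) f (Cone s).
Proof.
rewrite (reindex (@c3 n)); last first.
  by exists (@c3inv n) => [[[s|s]|[[|//] ?]]|[s||s]] //=; rewrite (_ : Ordinal _ = ord0) //; apply: val_inj.
rewrite big_sumType big_sumType big_ord1 /=.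
by rewrite -!addrA [f Apex + _]addrC.
Qed.
Lemma coneDD (F : fieldType) n dim face : is_delta_complex dim face ->
  forall x w : csimp n, \sum_y coneD F dim face x y * coneD F dim face y w = 0.
Proof.
move=> HK x w; rewrite sum_csimp.
case: w => [t||t]; case: x => [r||r] /=.
all: rewrite ?mulr0 ?mul0r ?addr0 ?add0r.
all: try (by rewrite ?big1 ?addr0 // => *; rewrite ?mulr0 ?mul0r).
- by rewrite [X in _ + X]big1 ?addr0 ?(bdK_dd _ HK) // => s _; rewrite mulr0.
- under eq_bigr => s _ do rewrite eq_sym.
  under [X in _ + X]eq_bigr => s _ do rewrite mulrC.
  by rewrite !pick1 subrr.
- rewrite big1 ?add0r; last by move=> s _; rewrite mul0r.
  case Et: (dim t) => [|p].
    by apply: big1 => s _; rewrite [bdK F dim face s t]/bdK Et oppr0 mulr0.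
  under eq_bigr => s _ do rewrite (bdKE _ _ _ Et) mulrN mulr_sumr.
  rewrite sumrN exchange_big /=.
  have inner : forall i : 'I_p.+2, \sum_s (match dim s with 0%N => -1 | _.+1 => 0 end : F) * ((-1) ^+ i * (face t i == s)%:R)
   = (-1) ^+ i * (match dim (face t i) with 0%N => -1 | _.+1 => 0 end : F).
    move=> i; rewrite -(pick1 (fun s : 'I_n => (match dim s with 0%N => -1 | _.+1 => 0 end : F)) (face t i)) mulr_sumr; apply: eq_bigr => s _; ring.
  under eq_bigr => i _ do rewrite inner.
  have Hd : forall i : 'I_p.+2, dim (face t i) = p.
    by move=> i; case: HK => Hdim _; rewrite Hdim Et //; rewrite -ltnS; exact: ltn_ord.
  under eq_bigr => i _ do rewrite Hd.
  case: p {Et inner Hd} => [|q].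
    by rewrite !big_ord_recr big_ord0 /= expr0 expr1; ring.
  by rewrite big1 ?oppr0 // => i _; rewrite mulr0.
- rewrite big1 ?add0r; last by move=> s _; rewrite mul0r.
  under eq_bigr => s _ do rewrite mulrNN.
  exact: bdK_dd.
Qed.
Lemma cbdB (F : fieldType) n dim face (f g : csimp n -> F) x :
  cbd dim face (fun y => f y - g y) x = cbd dim face f x - cbd dim face g x.
Proof. by rewrite /cbd -sumrB; apply: eq_bigr => w _; rewrite mulrBr. Qed.

Lemma cbd_cbd (F : fieldType) n dim face (c : csimp n -> F) x :
  is_delta_complex dim face -> cbd dim face (cbd dim face c) x = 0.
Proof.
move=> HK; rewrite /cbd.
under eq_bigr => w _ do rewrite mulr_sumr.
rewrite exchange_big /=; apply: big1 => u _.
under eq_bigr => w _ do rewrite mulrA.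
by rewrite -mulr_suml (coneDD F HK x u) mul0r.
Qed.

Lemma bdK_pf (F : fieldType) n dim face (s t : 'I_n) :
  bdK F dim face s t != 0 -> proper_face dim face s t.
Proof.
rewrite /bdK; case Et: (dim t) => [|p]; first by rewrite eqxx.
case: (boolP [exists i : 'I_p.+2, face t i == s]) => [/existsP[i Hi]|/existsPn Hn]; last first.
  by rewrite big1 ?eqxx // => i _; rewrite (negPf (Hn i)) mulr0.
move=> _; exists t; last exact: connect0.
rewrite /facet Et /=; apply/existsP.
by exists i.
Qed.

Unset Implicit Arguments.
Theorem claim6p3 (F : fieldType) (n : nat) (dim : 'I_n -> nat)
  (face : 'I_n -> nat -> 'I_n) (mn mx : 'I_n -> int)
  (R V : csimp n -> csimp n -> F) (sigma tau : 'I_n) :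
  is_delta_complex dim face ->
  interval_hyps dim face mn mx ->
  RDV_decomposition dim face mn mx R V ->
  is_low mn mx R (Cone tau) (Base sigma) ->
  mn sigma > mx tau ->
  let b := mx tau in
  let d := mn sigma in
  let c : csimp n -> F := fun x =>
    match x with
    | Base s => if b <= mx s then V x (Cone tau) else 0
    | _ => V x (Cone tau)
    end in
  let z := cbd dim face c in
  (forall x, cbd dim face z x = 0)
  /\ (forall x, z x != 0 -> exists2 s, x = Base s & (b <= mx s) && (mn s <= d))
  /\ z (Base sigma) != 0 /\ z (Base tau) != 0.
Proof.
move=> HK [Hlt [Hpf _]] [HR [HVut [HVd _]]] [Rne Rlow] Hsb b d c z.
have Hbd : forall r t, bdK F dim face r t != 0 -> (mn r < mn t) /\ (mn t < mx t) /\ (mx t < mx r).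
  by move=> r t /bdK_pf; apply: Hpf.
pose a : csimp n -> F := fun w => match w with
   Base s => if b <= mx s then 0 else V w (Cone tau) | _ => 0 end.
have Hz : forall x, z x = R x (Cone tau) - cbd dim face a x.
  move=> x; rewrite HR -(cbdB _ _ (fun y => V y (Cone tau))) /z /cbd.
  apply: eq_bigr => w _; congr (_ * _).
  by case: w => [s||s] /=; rewrite ?subr0 //; case: ifP => _; rewrite ?subr0 ?subrr.
have Rnb : forall x, R x (Cone tau) != 0 -> exists2 s, x = Base s & mn s <= d.
  by move=> [s||s] /Rlow //= H; exists s.
have Anb : forall r, b <= mn r -> cbd dim face a (Base r) = 0.
  move=> r Hr; apply: big1 => [[t||t]] _ //=; rewrite ?mulr0 //.
  case: ifP => Ht; rewrite ?mulr0 //.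
  case: (eqVneq (bdK F dim face r t) 0) => [->|/Hbd]; rewrite ?mul0r //.
  move=> [h1 [h2 h3]]; exfalso; move/negbT: Ht; rewrite -ltNge => Ht.
  move: Hr h1 h2 Ht; rewrite /b; lia.
have Anc : forall x, (forall r, x <> Base r) -> cbd dim face a x = 0.
  move=> x Hx; apply: big1 => [[t||t]] _ //=; rewrite ?mulr0 //.
  by case: x Hx => [r||r] Hx //=; [case: (Hx r) | rewrite mul0r | rewrite mul0r].
have AnA : cbd dim face a Apex = 0 by apply: Anc.
have AnC : forall r, cbd dim face a (Cone r) = 0 by move=> r; apply: Anc.
split; first by move=> x; exact: cbd_cbd.
split.
  case=> [r||r] Hzr; [| exfalso; move: Hzr; rewrite Hz ?AnA ?AnC subr0; by move=> /Rnb [s] ..].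
  exists r => //; apply/andP; split.
  + rewrite leNgt; apply/negP => Hr; move/eqP: Hzr; apply.
    apply: big1 => [[t||t]] _ //=; rewrite ?mul0r //.
    * case: ifP => Ht; rewrite ?mulr0 //.
      case: (eqVneq (bdK F dim face r t) 0) => [->|/Hbd]; rewrite ?mul0r //.
      move=> [h1 [h2 h3]]; exfalso; move: Hr Ht h3; rewrite /b; lia.
    * case: (eqVneq r t) => [<-|]; last by rewrite mul0r.
      case: (eqVneq (V (Cone r) (Cone tau)) 0) => [->|/HVut /=]; rewrite ?mulr0 //.
      move: Hr; rewrite /b; lia.
  + rewrite leNgt; apply/negP => Hr; move/eqP: Hzr; apply.
    rewrite Hz Anb; last by move: Hr Hsb; rewrite /b /d; lia.
    rewrite subr0; case: (eqVneq (R (Base r) (Cone tau)) 0) => [//|/Rnb [s [<-]]].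
    by move: Hr; rewrite /d; lia.
split.
  rewrite Hz Anb ?subr0 //; move: Hsb; rewrite /b; lia.
rewrite /z /cbd (bigD1 (Cone tau)) //= eqxx mul1r big1 ?addr0 //.
move=> [t||t] /= Ht; rewrite ?mul0r //.
- case: ifP => Hb; rewrite ?mulr0 //.
  case: (eqVneq (bdK F dim face tau t) 0) => [->|/Hbd]; rewrite ?mul0r //.
  move=> [h1 [h2 h3]]; exfalso; move: Hb h3; rewrite /b; lia.
- have : tau != t by apply: contraNneq Ht => ->.
  by move/negPf => ->; rewrite mul0r.
Qed.
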